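(* For $\alpha\in\mathbb N$ and $n\ge 0$, $$\det\left(1/F_{\alpha+i+j}\right)_{0\le i,j\le n}=\left((-1)^{\alpha\binom{n+1}{2}}F_\alpha\prod_{k=1}^nF_{\alpha+2k}\binom{\alpha+2k-1}{k}_{\mathbb F}^2\right)^{-1},$$ which is the reciprocal of an integer.
   Context: $F_n$ are the Fibonacci numbers ($F_0=0,F_1=1,F_{n+1}=F_n+F_{n-1}$). The Fibonomial coefficients are $\binom{n}{k}_{\mathbb F}=\prod_{i=1}^k F_{n-i+1}/F_i$ for $0\le k\le n$ (empty product $=1$). *)

(* Defs.v *)
From mathcomp Require Import all_boot all_order all_algebra.
Set Implicit Arguments. Unset Strict Implicit. Unset Printing Implicit Defensive.
Import GRing.Theory Num.Theory.

Fixpoint fib (n : nat) : nat :=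
  match n with
  | 0 => 0
  | 1 => 1
  | (m.+1 as p).+1 => fib p + fib m
  end.

Local Open Scope ring_scope.

Definition fibonomial (n k : nat) : rat :=
  \prod_(1 <= i < k.+1) ((fib (n - i + 1))%:R / (fib i)%:R).

(* Main.v *)
Require Import Defs.
From mathcomp Require Import all_boot all_order all_algebra.
From mathcomp Require Import ring zify.
Import GRing.Theory Num.Theory.
Local Open Scope ring_scope.
Lemma bump0 k : bump 0 k = k.+1. Proof. by rewrite /bump leq0n add1n. Qed.
Lemma prod_tri_recl (F : comRingType) N (f : nat -> nat -> F) :
  \prod_(j < N.+1) \prod_(i < j) f i j =
  (\prod_(j < N) f 0%N j.+1) * \prod_(j < N) \prod_(i < j) f i.+1 j.+1.
Proof.
rewrite big_ord_recl big_ord0 mul1r -big_split /=.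
apply: eq_bigr => j _; by rewrite big_ord_recl.
Qed.
Lemma prod_sq_recl (F : comRingType) N (g : nat -> nat -> F) :
  \prod_(i < N.+1) \prod_(j < N.+1) g i j =
  g 0%N 0%N * (\prod_(j < N) g 0%N j.+1) *
  ((\prod_(i < N) g i.+1 0%N) * \prod_(i < N) \prod_(j < N) g i.+1 j.+1).
Proof.
rewrite big_ord_recl big_ord_recl -big_split /=.
congr (_ * _ * _).
by apply: eq_bigr => i _; rewrite big_ord_recl.
Qed.

Lemma schur_det (F : fieldType) N (A : 'M[F]_(1 + N)) : A 0 0 != 0 ->
  \det A = A 0 0 * \det (\matrix_(i < N, j < N)
     (A (rshift 1 i) (rshift 1 j) - A (rshift 1 i) 0 * A 0 (rshift 1 j) / A 0 0)).
Proof.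
move=> a0.
set W : 'M_(N,1) := \matrix_(i, j) (A (rshift 1 i) 0 / A 0 0).
set S := \matrix_(i < N, j < N) _.
have l0 : lshift N (0 : 'I_1) = 0 by apply: val_inj.
have E : A = block_mx 1%:M 0 W 1%:M *m block_mx (ulsubmx A) (ursubmx A) 0 S.
  rewrite mulmx_block !mul1mx !mul0mx !addr0 ?add0r ?mul1mx.
  rewrite -[LHS]submxK; congr block_mx.
  - apply/matrixP => i j; rewrite !mxE big_ord1 !mxE (ord1 j) l0.
    by rewrite mulrAC -mulrA divff // mulr1.
  - apply/matrixP => i j; rewrite !mxE big_ord1 !mxE l0.
    by rewrite mulrAC addrC subrK.
rewrite [in LHS]E det_mulmx det_lblock det_ublock !det1 !mul1r det_mx11 !mxE l0.
done.
Qed.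

Lemma cauchy (F : fieldType) N (p q r s : nat -> F) :
  (forall i j, p i * q j + r i * s j != 0) ->
  \det (\matrix_(i < N, j < N) (p i * q j + r i * s j)^-1) =
  (\prod_(j < N) \prod_(i < j) ((r i * p j - p i * r j) * (q i * s j - s i * q j))) /
  \prod_(i < N) \prod_(j < N) (p i * q j + r i * s j).
Proof.
elim: N p q r s => [|N IH] p q r s nz.
  by rewrite det_mx00 !big_ord0 invr1 mulr1.
rewrite (@schur_det _ N) !mxE /=; last by rewrite invr_eq0.
set e := fun i j => p i * q j + r i * s j.
pose al i := (r 0%N * p i.+1 - p 0%N * r i.+1) / e i.+1 0%N.
pose be j := (q 0%N * s j.+1 - s 0%N * q j.+1) / e 0%N j.+1.
match goal with |- _ * \det ?M = _ => have -> : M = diag_mx (\row_(i < N) al i) *m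
   \matrix_(i < N, j < N) (p i.+1 * q j.+1 + r i.+1 * s j.+1)^-1 *m
   diag_mx (\row_(j < N) be j) end.
  apply/matrixP => i j; rewrite mul_diag_mx mul_mx_diag !mxE /= /al /be /e.
  rewrite !add1n.
  have h1 := nz i.+1 j.+1; have h2 := nz i.+1 0%N; have h3 := nz 0%N j.+1; have h4 := nz 0%N 0%N.
  field.
  by rewrite h1 h2 h3 h4 oner_eq0.
rewrite det_mulmx det_mulmx !det_diag (IH (fun k => p k.+1) (fun k => q k.+1) (fun k => r k.+1) (fun k => s k.+1)); last first.
  by move=> i j; apply: nz.
rewrite (eq_bigr (fun i : 'I_N => al i)); last by move=> i _; rewrite mxE.
rewrite [X in _ * (_ * X)](eq_bigr (fun i : 'I_N => be i)); last by move=> i _; rewrite mxE.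
rewrite /al /be !prodf_div (prod_tri_recl _ _ (fun i j => (r i * p j - p i * r j) * (q i * s j - s i * q j))) (prod_sq_recl _ _ (fun i j => p i * q j + r i * s j)) big_split /=.
rewrite /e.
have n1 : \prod_(i < N) (p i.+1 * q 0%N + r i.+1 * s 0%N) != 0.
  by apply/prodf_neq0 => i _; apply: nz.
have n2 : \prod_(j < N) (p 0%N * q j.+1 + r 0%N * s j.+1) != 0.
  by apply/prodf_neq0 => i _; apply: nz.
have n3 : \prod_(i < N) \prod_(j < N) (p i.+1 * q j.+1 + r i.+1 * s j.+1) != 0.
  by apply/prodf_neq0 => i _; apply/prodf_neq0 => j _; apply: nz.
have n4 := nz 0%N 0%N.
field.
by rewrite n1 n2 n3 n4.
Qed.

Lemma fibSS n : fib n.+2 = (fib n.+1 + fib n)%N. Proof. by []. Qed.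

Lemma fib_add m p : fib (m + p).+1 = (fib m.+1 * fib p.+1 + fib m * fib p)%N.
Proof.
elim: m p => [|m IH] p; first by rewrite add0n /= mul1n mul0n addn0.
rewrite addSnnS IH !fibSS; lia.
Qed.

Lemma fib_gt0 n : (0 < fib n.+1)%N.
Proof. elim: n => [//|n IH]; rewrite fibSS; lia. Qed.

Lemma fib_neq0 n : (fib n.+1)%:R != 0 :> rat.
Proof. by rewrite pnatr_eq0 -lt0n fib_gt0. Qed.

Lemma docagne i d : (fib i)%:R * (fib (i + d).+1)%:R - (fib i.+1)%:R * (fib (i + d))%:R
   = (-1) ^+ i.+1 * (fib d)%:R :> rat.
Proof.
elim: i => [|i IH]; first by rewrite /= mul0r mul1r sub0r add0n expr1 mulN1r.
rewrite addSn !fibSS !natrD exprS mulN1r mulNr -IH; ring.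
Qed.

Fixpoint fibb (n k : nat) : nat :=
  match n, k with
  | _, 0 => 1
  | 0, _.+1 => 0
  | n'.+1, k'.+1 => fib (n' - k').+1 * fibb n' k' + fib k' * fibb n' k'.+1
  end.

Lemma fibb_gt n k : (n < k)%N -> fibb n k = 0%N.
Proof.
elim: n k => [|n IH] [|k] //= lt; rewrite !IH //; lia.
Qed.

Lemma fibb_diag n : fibb n n = 1%N.
Proof. elim: n => [//|n IH] /=; rewrite subnn IH fibb_gt //; lia. Qed.

Lemma fibonomialE n k : fibonomial n k =
  (\prod_(1 <= i < k.+1) (fib (n - i + 1))%:R) / \prod_(1 <= i < k.+1) (fib i)%:R.
Proof. by rewrite /fibonomial prodf_div. Qed.

Lemma fibonomial_diag n : fibonomial n n = 1.
Proof.
rewrite fibonomialE big_nat_rev /= add1n.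
have -> : \prod_(1 <= i < n.+1) (fib (n - (n.+2 - i.+1) + 1))%:R =
          \prod_(1 <= i < n.+1) (fib i)%:R :> rat.
  apply: eq_big_nat => i /andP [h1 h2]; congr (_%:R); congr fib; lia.
rewrite divff // prodf_seq_neq0; apply/allP => i; rewrite mem_index_iota => /andP [h _].
by case: i h => [|i] // _; rewrite fib_neq0.
Qed.

Lemma fibonomial_rec n k : (k < n)%N ->
  fibonomial n.+1 k.+1 = (fib (n - k).+1)%:R * fibonomial n k + (fib k)%:R * fibonomial n k.+1.
Proof.
move=> kn; rewrite !fibonomialE.
set Nk := \prod_(1 <= i < k.+1) (fib (n - i + 1))%:R.
set K := \prod_(1 <= i < k.+1) (fib i)%:R.
have e1 : \prod_(1 <= i < k.+2) (fib (n.+1 - i + 1))%:R = (fib n.+1)%:R * Nk :> rat.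
  rewrite big_nat_recl // subn1 addn1 /=; congr (_ * _).
have e2 : \prod_(1 <= i < k.+2) (fib (n - i + 1))%:R = Nk * (fib (n - k))%:R :> rat.
  rewrite big_nat_recr //= -/Nk; congr (_ * (fib _)%:R); lia.
have e3 : \prod_(1 <= i < k.+2) (fib i)%:R = K * (fib k.+1)%:R :> rat.
  by rewrite big_nat_recr.
rewrite e1 e2 e3.
have Kn : K != 0.
  rewrite prodf_seq_neq0; apply/allP => i; rewrite mem_index_iota => /andP [h _].
  by case: i h => [|i] // _; rewrite fib_neq0.
have hk := fib_neq0 k.
have hf : fib n.+1 = (fib k.+1 * fib (n - k).+1 + fib k * fib (n - k))%N.
  by rewrite -fib_add; congr fib; lia.
rewrite hf natrD !natrM.
field.
by rewrite Kn hk.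
Qed.

Lemma fibonomial_nat n k : (k <= n)%N -> fibonomial n k = (fibb n k)%:R.
Proof.
elim: n k => [|n IH] [|k] //.
- by move=> _; rewrite /fibonomial big_geq.
- by move=> _; rewrite /fibonomial big_geq.
- rewrite ltnS leq_eqVlt => /orP [/eqP ->|kn].
    by rewrite fibonomial_diag fibb_diag.
  rewrite fibonomial_rec // !IH //; last exact: ltnW.
  by rewrite /= natrD !natrM.
Qed.

Lemma prod_rev1 (F : comRingType) m (g : nat -> F) :
  \prod_(1 <= i < m.+1) g i = \prod_(i < m) g (m - i)%N.
Proof.
rewrite big_nat_rev big_add1 /= big_mkord.
by apply: eq_bigr => i _; congr g; have := ltn_ord i; lia.
Qed.

Lemma fibonomial_prod b m :
  fibonomial (b.+1 + 2 * m - 1) m * \prod_(i < m) (fib (m - i))%:R =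
  \prod_(i < m) (fib (b.+1 + m + i))%:R.
Proof.
rewrite fibonomialE !prod_rev1.
have -> : \prod_(i < m) (fib (b.+1 + 2 * m - 1 - (m - i) + 1))%:R =
          \prod_(i < m) (fib (b.+1 + m + i))%:R :> rat.
  by apply: eq_bigr => i _; congr (fib _)%:R; have := ltn_ord i; lia.
rewrite divfK // prodf_seq_neq0; apply/allP => i _ /=.
have -> : (m - i = (m - i).-1.+1)%N by have := ltn_ord i; lia.
exact: fib_neq0.
Qed.

Lemma prod_tri_recr (F : comRingType) N (f : nat -> nat -> F) :
  \prod_(j < N.+1) \prod_(i < j) f i j =
  (\prod_(j < N) \prod_(i < j) f i j) * \prod_(i < N) f i N.
Proof. by rewrite big_ord_recr. Qed.

Lemma prod_sq_recr (F : comRingType) N (g : nat -> nat -> F) :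
  \prod_(i < N.+1) \prod_(j < N.+1) g i j =
  (\prod_(i < N) \prod_(j < N) g i j) * \prod_(i < N) g i N *
  ((\prod_(j < N) g N j) * g N N).
Proof.
rewrite big_ord_recr /=; congr (_ * _); last by rewrite big_ord_recr.
rewrite -big_split /=; apply: eq_bigr => i _; by rewrite big_ord_recr.
Qed.

Lemma sgn_sq x : (-1) ^+ x * (-1) ^+ x = 1 :> rat.
Proof. by rewrite -expr2 sqrr_sign. Qed.

Definition Dv (a n : nat) : rat := (-1) ^+ (a * 'C(n.+1, 2)) * (fib a)%:R *
      \prod_(1 <= k < n.+1)
         ((fib (a + 2 * k))%:R * fibonomial (a + 2 * k - 1) k ^+ 2).

Lemma DTS b n : Dv b.+1 n *
   \prod_(j < n.+1) \prod_(i < j) ((-1) ^+ b.+1 * (fib (j - i))%:R ^+ 2) =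
   \prod_(i < n.+1) \prod_(j < n.+1) (fib (b.+1 + i + j))%:R.
Proof.
elim: n => [|n IH].
  by rewrite /Dv big_geq // !big_ord1 big_ord0 !mulr1 !addn0 bin_small // muln0 expr0 mul1r.
have HD : Dv b.+1 n.+1 = Dv b.+1 n * ((-1) ^+ (b.+1 * n.+1) *
   ((fib (b.+1 + 2 * n.+1))%:R * fibonomial (b.+1 + 2 * n.+1 - 1) n.+1 ^+ 2)).
  by rewrite /Dv big_nat_recr //= binS bin1 mulnDr exprD; ring.
rewrite HD (prod_tri_recr _ _ (fun i j => (-1) ^+ b.+1 * (fib (j - i))%:R ^+ 2))
  (prod_sq_recr _ _ (fun i j => (fib (b.+1 + i + j))%:R)) -IH.
set m := n.+1.
have key : (-1) ^+ (b.+1 * m) *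
   ((fib (b.+1 + 2 * m))%:R * fibonomial (b.+1 + 2 * m - 1) m ^+ 2) *
   \prod_(i < m) ((-1) ^+ b.+1 * (fib (m - i))%:R ^+ 2) =
   \prod_(i < m) (fib (b.+1 + i + m))%:R *
   (\prod_(j < m) (fib (b.+1 + m + j))%:R * (fib (b.+1 + m + m))%:R) :> rat.
  rewrite prodrMl card_ord -exprM prodrXl.
  rewrite [X in _ = X * _](eq_bigr (fun i : 'I_m => (fib (b.+1 + m + i))%:R : rat)); last first.
    by move=> i _; rewrite addnAC.
  rewrite -(fibonomial_prod b m) (_ : (b.+1 + 2 * m = b.+1 + m + m)%N); last by lia.
  set s := (-1) ^+ (b.+1 * m) : rat.
  transitivity ((s * s) * ((fib (b.+1 + m + m))%:R *
     (fibonomial (b.+1 + m + m - 1) m * \prod_(i < m) (fib (m - i))%:R) ^+ 2)).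
    by ring.
  by rewrite sgn_sq; ring.
transitivity (Dv b.+1 n * \prod_(j < m) \prod_(i < j) ((-1) ^+ b.+1 * (fib (j - i))%:R ^+ 2) *
  ((-1) ^+ (b.+1 * m) *
   ((fib (b.+1 + 2 * m))%:R * fibonomial (b.+1 + 2 * m - 1) m ^+ 2) *
   \prod_(i < m) ((-1) ^+ b.+1 * (fib (m - i))%:R ^+ 2))).
  by ring.
by rewrite key; ring.
Qed.

Theorem corollary3p3 (alpha n : nat) (halpha : (1 <= alpha)%N) :
  let D : rat := (-1) ^+ (alpha * 'C(n.+1, 2)) * (fib alpha)%:R *
      \prod_(1 <= k < n.+1)
         ((fib (alpha + 2 * k))%:R * fibonomial (alpha + 2 * k - 1) k ^+ 2) in
  \det (\matrix_(i < n.+1, j < n.+1) ((fib (alpha + i + j))%:R : rat)^-1) = D^-1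
  /\ exists z : int, D = z%:~R.
Proof.
case: alpha halpha => [//|b] _ D.
have hD : D = Dv b.+1 n by [].
split.
  pose p i := (fib i.+1)%:R : rat.
  pose q j := (fib (b.+1 + j))%:R : rat.
  pose r i := (fib i)%:R : rat.
  pose s j := (fib (b + j))%:R : rat.
  have ent i j : p i * q j + r i * s j = (fib (b.+1 + i + j))%:R.
    rewrite /p /q /r /s -!natrM -natrD addSn -fib_add; congr (fib _)%:R; lia.
  have nz i j : p i * q j + r i * s j != 0.
    by rewrite ent (_ : (b.+1 + i + j = (b + i + j).+1)%N) ?fib_neq0 //; lia.
  have EM : \matrix_(i < n.+1, j < n.+1) ((fib (b.+1 + i + j))%:R : rat)^-1 =
            \matrix_(i < n.+1, j < n.+1) (p i * q j + r i * s j)^-1.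
    by apply/matrixP => i j; rewrite !mxE ent.
  rewrite EM cauchy //.
  rewrite (eq_bigr (fun j : 'I_n.+1 =>
      \prod_(i < j) ((-1) ^+ b.+1 * (fib (j - i))%:R ^+ 2))); last first.
    move=> j _; apply: eq_bigr => i _.
    rewrite /p /q /r /s.
    set d := (j - i)%N.
    have hj : (j : nat) = (i + d)%N by have := ltn_ord i; rewrite /d; lia.
    have E1 := docagne i d; rewrite -hj in E1.
    have E2 := docagne (b + i) d; rewrite -addnA -hj in E2.
    transitivity ((-1) ^+ i.+1 * (fib d)%:R * - ((-1) ^+ (b + i).+1 * (fib d)%:R) : rat).
      by rewrite -E1 -E2 !addSn; ring.
    rewrite !exprS exprD.
    transitivity (((-1) ^+ i * (-1) ^+ i) * (-1 * (-1) ^+ b * (fib d)%:R ^+ 2) : rat).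
      by ring.
    by rewrite sgn_sq; ring.
  rewrite [X in _ / X](eq_bigr (fun i : 'I_n.+1 =>
      \prod_(j < n.+1) (fib (b.+1 + i + j))%:R)); last first.
    by move=> i _; apply: eq_bigr => j _; rewrite ent.
  have H := DTS b n; rewrite -hD in H.
  rewrite -H.
  have hS : D * \prod_(j < n.+1) \prod_(i < j) ((-1) ^+ b.+1 * (fib (j - i))%:R ^+ 2) != 0.
    rewrite H; apply/prodf_neq0 => i _; apply/prodf_neq0 => j _.
    by rewrite (_ : (b.+1 + i + j = (b + i + j).+1)%N) ?fib_neq0 //; lia.
  move: hS; rewrite mulf_eq0 negb_or => /andP [h1 h2].
  by field; rewrite h1 h2.
set M := (fib b.+1 * \prod_(1 <= k < n.+1) (fib (b.+1 + 2 * k) * fibb (b.+1 + 2 * k - 1) k ^ 2))%N.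
exists ((-1) ^+ (b.+1 * 'C(n.+1, 2)) * M%:Z).
rewrite (_ : (((-1) ^+ (b.+1 * 'C(n.+1, 2)) * M%:Z)%:~R : rat) =
   (-1) ^+ (b.+1 * 'C(n.+1, 2)) * M%:R); last by rewrite rmorphM rmorphXn rmorphN1.
rewrite /M natrM natr_prod /D -mulrA; congr (_ * (_ * _)).
apply: eq_big_nat => k /andP [h1 h2].
rewrite natrM natrX fibonomial_nat //; lia.
Qed.
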